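(* Let $G$ be a finite graph with $n$ vertices, each of degree at least $1$. Take $r=2$, $V=\mathbb{C}^2$, $B=I_2$, and the tensors $A_1^1=0$, $A_1^2=t$, and for $d\ge 2$: $A_d^{i_1\dots i_d}=x_1$ if $(i_1,\dots,i_d)$ is a permutation of $(1,1,2,\dots,2)$, $=t$ if $(i_1,\dots,i_d)=(2,\dots,2)$, and $0$ otherwise, with $x_1=1$ and $t=0$. Then $\mathcal{F}_{\mathcal{A},I_2}(G)$ equals the number of spanning cycles of $G$, i.e. of $2$-valent subgraphs of $G$ with $n$ edges.
   Context: $\mathcal{F}_{\mathcal{A},B}(G)=\sum_{c:H\to\{1,\dots,r\}}\prod_{\{h,h'\}\in E(G)}B_{c(h)c(h')}\prod_{k}A_{d_k}^{c(h_{k,1})\dots c(h_{k,d_k})}$, where $H$ is the set of half-edges of $G$ (two per edge, loops included) and $h_{k,1},\dots,h_{k,d_k}$ are the half-edges at vertex $v_k$ of degree $d_k$; i.e. a copy of $A_{d_k}$ is placed at each vertex and contracted along edges using $B$. A cycle of $G$ is a $2$-valent subgraph (every vertex in it has degree $2$ within it, loops counted twice), not necessarily connected; a spanning cycle is one with $n=|V(G)|$ edges. *)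

(* Defs.v *)
From mathcomp Require Import all_boot all_order all_algebra all_field.
Set Implicit Arguments. Unset Strict Implicit. Unset Printing Implicit Defensive.
Import GRing.Theory Num.Theory.
Local Open Scope ring_scope.

(* A finite (multi)graph with loops allowed: vertex set V, edge set E, and
   each edge e has two half-edges (e,false), (e,true); [ends h] is the vertex
   of half-edge h.  A loop is an edge whose two half-edges have the same end. *)

Definition halfedges_at (V E : finType) (ends : E * bool -> V) (v : V) :
  seq (E * bool) := enum [pred h : E * bool | ends h == v].

Definition degree (V E : finType) (ends : E * bool -> V) (v : V) : nat :=
  size (halfedges_at ends v).

(* A tensor family is given as a function A : seq 'I_2 -> algC, where
   A [:: i_1; ...; i_d] = A_d^{i_1...i_d}.  Colour 1 is ord0, colour 2 is ord1. *)
Definition partF (V E : finType) (ends : E * bool -> V)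
    (A : seq 'I_2 -> algC) (B : 'M[algC]_2) : algC :=
  \sum_(c : {ffun E * bool -> 'I_2})
     (\prod_(e : E) B (c (e, false)) (c (e, true))) *
     \prod_(v : V) A [seq c h | h <- halfedges_at ends v].

Definition col1 : 'I_2 := ord0.
Definition col2 : 'I_2 := ord_max.

Definition Atensor (x1 t : algC) (s : seq 'I_2) : algC :=
  let d := size s in
  if d == 1%N then (if s == [:: col2] then t else 0)
  else if perm_eq s (col1 :: col1 :: nseq (d - 2) col2) then x1
  else if s == nseq d col2 then t
  else 0.

(* Degree of v in the subgraph with edge set S (loops counted twice). *)
Definition sub_degree (V E : finType) (ends : E * bool -> V) (S : {set E})
    (v : V) : nat :=
  #|[set h : E * bool | (h.1 \in S) && (ends h == v)]|.

Definition is_cycle (V E : finType) (ends : E * bool -> V) (S : {set E}) : bool :=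
  [forall v : V, (sub_degree ends S v == 0%N) || (sub_degree ends S v == 2%N)].

Definition spanning_cycles (V E : finType) (ends : E * bool -> V) : {set {set E}} :=
  [set S : {set E} | is_cycle ends S && (#|S| == #|V|)].

(* Main.v *)
Require Import Defs.
From mathcomp Require Import all_boot all_order all_algebra all_field.
From mathcomp Require Import zify.
Set Implicit Arguments. Unset Strict Implicit. Unset Printing Implicit Defensive.
Import GRing.Theory Num.Theory.
Local Open Scope ring_scope.

Lemma I2_cases (x : 'I_2) : (x == Defs.col2) = (x != Defs.col1).
Proof. by case: x => [[|[|m]] Hm]. Qed.

Lemma Atensor_eq (s : seq 'I_2) :
  Atensor 1 0 s = (count (pred1 Defs.col1) s == 2%N)%:R.
Proof.
rewrite /Atensor !if_same.
case: ifP => [/eqP Hs | Hs].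
  case: s Hs => [|x [|y s]] //= _.
  by case: (x == Defs.col1).
set t := (Defs.col1 :: Defs.col1 :: nseq (size s - 2) Defs.col2).
have ct : count (pred1 Defs.col1) t = 2%N.
  by rewrite /t /= count_nseq.
case: ifP => [Hp | Hp].
  by rewrite (permP Hp) ct eqxx.
case: eqP => // Hc; exfalso; move: Hp => /negbT/negP; apply.
have szs : (2 <= size s)%N by move: (count_size (pred1 Defs.col1) s); rewrite Hc.
rewrite /perm_eq; apply/allP => x _.
have sz : size t = size s by rewrite /t /= size_nseq; lia.
clearbody t.
case: (boolP (x == Defs.col1)) => [/eqP -> | Hx].
  by rewrite /= ct Hc.
have E : forall u : seq 'I_2, count_mem x u = (size u - count (pred1 Defs.col1) u)%N.
  move=> u; rewrite -(count_predC (pred1 Defs.col1) u) addKn; apply: eq_count => z /=.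
  by move: Hx; rewrite -I2_cases => /eqP ->; rewrite I2_cases.
by rewrite /= !E sz ct Hc.
Qed.

Section G.
Variables (V E : finType) (ends : E * bool -> V).

Definition fS (S : {set E}) : {ffun E * bool -> 'I_2} :=
  [ffun h : E * bool => if h.1 \in S then Defs.col1 else Defs.col2].

Lemma count_sub S v :
  count (pred1 Defs.col1) [seq fS S h | h <- halfedges_at ends v] = sub_degree ends S v.
Proof.
rewrite /halfedges_at count_map /sub_degree cardE /enum_mem -size_filter.
rewrite -filter_predI; congr size; apply: eq_filter => h /=.
by rewrite !inE ffunE /=; case: (h.1 \in S).
Qed.

Lemma sum_sub S : (\sum_v sub_degree ends S v = #|S| * 2)%N.
Proof.
rewrite /sub_degree.
under eq_bigr => v _ do rewrite -sum1dep_card.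
rewrite -(partition_big (P := fun h : E * bool => h.1 \in S) ends xpredT) //.
rewrite sum1dep_card.
have -> : [set x : E * bool | x.1 \in S] = setX S [set: bool].
  by apply/setP => [[e b]]; rewrite !inE andbT.
by rewrite cardsX cardsT card_bool.
Qed.

End G.

Lemma prod_bool (R : pzSemiRingType) (I : finType) (b : I -> bool) :
  \prod_i ((b i)%:R : R) = ([forall i, b i])%:R.
Proof.
rewrite -natr_prod; congr (_%:R).
case: forallP => [H | /forallP/forallPn [i Hi]].
  by apply: big1 => i _; rewrite H.
by rewrite (bigD1 i) //= (negbTE Hi) mul0n.
Qed.

Theorem corollary2 (V E : finType) (ends : E * bool -> V)
    (hdeg : forall v : V, (0 < degree ends v)%N) :
  partF ends (Atensor 1 0) 1%:M = (#|spanning_cycles ends|)%:R.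
Proof.
pose good (c : {ffun E * bool -> 'I_2}) :=
  [forall e, c (e, false) == c (e, true)] &&
  [forall v, count (pred1 Defs.col1) [seq c h | h <- halfedges_at ends v] == 2%N].
rewrite /partF.
have term : forall c : {ffun E * bool -> 'I_2},
  (\prod_(e : E) (1%:M : 'M[algC]_2) (c (e, false)) (c (e, true))) *
     \prod_(v : V) Atensor 1 0 [seq c h | h <- halfedges_at ends v] = (good c)%:R.
  move=> c.
  under eq_bigr => e _ do rewrite mxE.
  under [X in _ * X]eq_bigr => v _ do rewrite Atensor_eq.
  by rewrite !prod_bool -natrM mulnb.
under eq_bigr => c _ do rewrite term.
rewrite -natr_sum; congr (_%:R).
have -> : (\sum_c (good c : nat) = #|[set c | good c]|)%N.
  rewrite -sum1dep_card [RHS]big_mkcond /=; apply: eq_bigr => c _.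
  by case: (good c).
have -> : [set c | good c] = (@fS E) @: spanning_cycles ends.
  apply/setP => c; rewrite inE; apply/idP/imsetP.
    case/andP => /forallP He /forallP Hv.
    exists [set e | c (e, false) == Defs.col1].
      have Hd : forall v, sub_degree ends [set e | c (e, false) == Defs.col1] v = 2%N.
        move=> v; rewrite -count_sub; apply/eqP; move: (Hv v).
        congr (count _ _ == _); apply: eq_map => h.
        case: h => e b; rewrite ffunE inE /=.
        have -> : c (e, b) = c (e, false) by case: b; first by rewrite (eqP (He e)).
        by case: ifP => [/eqP -> | ] //; move/negbT; rewrite -I2_cases => /eqP.
      rewrite inE; apply/andP; split.
        by apply/forallP => v; rewrite Hd.
      move: (sum_sub ends [set e | c (e, false) == Defs.col1]).
      under eq_bigr => v _ do rewrite Hd.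
      rewrite sum_nat_const cardT -cardE => H.
      apply/eqP; lia.
    apply/ffunP => [[e b]]; rewrite ffunE inE /=.
    have -> : c (e, b) = c (e, false) by case: b; first by rewrite (eqP (He e)).
    by case: ifP => [/eqP -> | ] //; move/negbT; rewrite -I2_cases => /eqP.
  case=> S; rewrite inE => /andP [/forallP Hcyc /eqP Hcard] ->.
  apply/andP; split; first by apply/forallP => e; rewrite !ffunE.
  apply/forallP => v; rewrite count_sub.
  have Hs := sum_sub ends S.
  have Hle : forall w, (sub_degree ends S w <= 2)%N.
    by move=> w; case/orP: (Hcyc w) => /eqP ->.
  have := sumnB (index_enum V) (P := xpredT) (E1 := sub_degree ends S) (E2 := fun=> 2%N) (fun w _ => Hle w).
  rewrite Hs -(big_mkcond (fun=> true)) sum_nat_const cardT -cardE Hcard subnn.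
  move/eqP; rewrite sum_nat_eq0 => /forallP /(_ v) /=.
  by move: (Hle v); lia.
rewrite card_imset //.
move=> S1 S2 H; apply/setP => e.
have := congr1 (fun f : {ffun E * bool -> 'I_2} => f (e, false)) H; rewrite !ffunE /=.
by case: (e \in S1); case: (e \in S2) => // /(congr1 val).
Qed.
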